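(* Let $X$ be an $X$-set parameter and let $G$ be a graph with no isolated vertices. Then the automorphism group of $\mathscr{X}^{\rm TAR}(G)$ is generated by $\{\nu_R : R\subseteq V(G)\text{ is }X\text{-irrelevant}\}\cup M_X(G)$, where each $\psi\in M_X(G)$ is regarded as the map $S\mapsto\psi(S)=\{\psi(s):s\in S\}$ on $X$-sets.
   Context: All graphs are simple, finite, with nonempty vertex set. An $X$-set parameter is a graph parameter $X(G)$ defined as the minimum cardinality of an $X$-set of $G$, where the $X$-sets of each graph are subsets of its vertex set determined by some property satisfying: (1) supersets (within $V(G)$) of $X$-sets are $X$-sets; (2) the empty set is never an $X$-set; (3) an $X$-set of a disconnected graph is the union of an $X$-set of each component; (4) if $G$ has no isolated vertices, every set of $|V(G)|-1$ vertices is an $X$-set. The $X$-TAR graph $\mathscr{X}^{\rm TAR}(G)$ has as vertices all $X$-sets of $G$, with $S_1,S_2$ adjacent iff $|S_1\ominus S_2|=1$ (symmetric difference). A vertex $v$ is $X$-irrelevant if $v\notin S$ for every minimal $X$-set $S$ of $G$; a set is $X$-irrelevant if all its vertices are. For $R\subseteq V(G)$, $\nu_R(S)=S\ominus R$. $M_X(G)$ is the set of bijections $\psi:V(G)\to V(G)$ that send minimal $X$-sets of $G$ to minimal $X$-sets of $G$ of the same size. *)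

(* Defs.v *)
From mathcomp Require Import all_boot all_fingroup.
Set Implicit Arguments. Unset Strict Implicit. Unset Printing Implicit Defensive.

Definition simple_graph (T : finType) (e : rel T) : Prop :=
  0 < #|T| /\ irreflexive e /\ symmetric e.

Definition no_isolated (T : finType) (e : rel T) : Prop :=
  forall x : T, exists y : T, e x y.

Definition disconnected (T : finType) (e : rel T) : Prop :=
  exists x y : T, ~~ connect e x y.

Definition is_component (T : finType) (e : rel T) (C : {set T}) : Prop :=
  exists x : T, C = [set y | connect e x y].

Definition ind_rel (T : finType) (e : rel T) (C : {set T}) :
  rel {x : T | x \in C} := fun u v => e (val u) (val v).

Arguments ind_rel {T} e C.
Definition trace_set (T : finType) (C : {set T}) (S : {set T}) :
  {set {x : T | x \in C}} := [set u : {x : T | x \in C} | val u \in S].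
Arguments trace_set {T} C S.

Definition graph_iso (T1 T2 : finType) (e1 : rel T1) (e2 : rel T2)
  (f : T1 -> T2) : Prop :=
  bijective f /\ forall x y, e2 (f x) (f y) = e1 x y.

(* A family of vertex-subset properties, one for each graph:
   X T e S  <=> S is an X-set of the graph (T, e). *)
Definition Xfamily := forall T : finType, rel T -> {set T} -> bool.

(* X-set parameter axioms (1)-(4), plus invariance under graph
   isomorphism (X is a graph parameter). *)
Definition Xset_parameter (X : Xfamily) : Prop :=
  (forall (T1 T2 : finType) (e1 : rel T1) (e2 : rel T2) (f : T1 -> T2),
      simple_graph e1 -> simple_graph e2 -> graph_iso e1 e2 f ->
      forall S : {set T1}, X T2 e2 (f @: S) = X T1 e1 S) /\
  (forall (T : finType) (e : rel T), simple_graph e ->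
      forall S S' : {set T}, S \subset S' -> X T e S -> X T e S') /\
  (forall (T : finType) (e : rel T), simple_graph e -> ~~ X T e set0) /\
  (forall (T : finType) (e : rel T), simple_graph e -> disconnected e ->
      forall S : {set T},
        X T e S <->
        (forall C : {set T}, is_component e C ->
           X _ (ind_rel e C) (trace_set C S))) /\
  (forall (T : finType) (e : rel T), simple_graph e -> no_isolated e ->
      forall S : {set T}, #|S| = #|T| - 1 -> X T e S).

Definition minimal_Xset (X : Xfamily) (T : finType) (e : rel T) (S : {set T}) : bool :=
  minset (X T e) S.

Definition X_irrelevant (X : Xfamily) (T : finType) (e : rel T) (R : {set T}) : bool :=
  [forall v in R, forall S : {set T}, minimal_Xset X e S ==> (v \notin S)].

Definition symdiff (T : finType) (A B : {set T}) : {set T} := (A :\: B) :|: (B :\: A).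

Definition M_X (X : Xfamily) (T : finType) (e : rel T) (psi : {perm T}) : bool :=
  [forall S : {set T}, minimal_Xset X e S ==>
    (minimal_Xset X e (psi @: S) && (#|psi @: S| == #|S|))].

Notation Xsets X T e := {S : {set T} | X T e S}.

Definition TAR_adj (X : Xfamily) (T : finType) (e : rel T) : rel (Xsets X T e) :=
  fun S1 S2 => #|symdiff (val S1) (val S2)| == 1.

Definition TAR_Aut (X : Xfamily) (T : finType) (e : rel T) : {set {perm Xsets X T e}} :=
  [set p : {perm Xsets X T e} |
    [forall S1, forall S2, TAR_adj (p S1) (p S2) == TAR_adj S1 S2]].

Definition acts_as_nu (X : Xfamily) (T : finType) (e : rel T)
  (R : {set T}) (p : {perm Xsets X T e}) : bool :=
  [forall S, val (p S) == symdiff (val S) R].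

Definition acts_as_psi (X : Xfamily) (T : finType) (e : rel T)
  (psi : {perm T}) (p : {perm Xsets X T e}) : bool :=
  [forall S, val (p S) == psi @: val S].

Definition TAR_gens (X : Xfamily) (T : finType) (e : rel T) : {set {perm Xsets X T e}} :=
  [set p : {perm Xsets X T e} |
    [exists R : {set T}, X_irrelevant X e R && acts_as_nu R p] ||
    [exists psi : {perm T}, M_X X e psi && acts_as_psi psi p]].

(* Main.v *)
Require Import Defs.
From mathcomp Require Import all_boot all_fingroup.
Set Implicit Arguments. Unset Strict Implicit. Unset Printing Implicit Defensive.

Section Flip.
Variable T : finType.
Implicit Types A B : {set T}.

Lemma in_symdiff A B t : (t \in symdiff A B) = (t \in A) (+) (t \in B).
Proof. by rewrite /symdiff !inE; case: (t \in A); case: (t \in B). Qed.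

Definition flip A x := symdiff A [set x].

Lemma in_flip A x t : (t \in flip A x) = (t \in A) (+) (t == x).
Proof. by rewrite in_symdiff inE. Qed.

Lemma flipK A x : flip (flip A x) x = A.
Proof. by apply/setP => t; rewrite !in_flip; case: (t \in A); case: (t == x). Qed.

Lemma flipC A x y : flip (flip A x) y = flip (flip A y) x.
Proof. by apply/setP => t; rewrite !in_flip; case: (t \in A); case: (t == x); case: (t==y). Qed.

Lemma flip_inj A x y : flip A x = flip A y -> x = y.
Proof.
move=> /setP /(_ x); rewrite !in_flip eqxx.
by case: (x \in A); case: eqP => // ->.
Qed.

Lemma flip2_eq A x y : flip (flip A x) y = A -> x = y.
Proof. by move=> H; apply: (@flip_inj (flip A x)); rewrite H flipK. Qed.

Lemma symdiff1P A B : reflect (exists x, B = flip A x) (#|symdiff A B| == 1).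
Proof.
apply: (iffP cards1P) => [[x Hx]|[x ->]]; exists x; apply/setP => t.
  move/setP: Hx => /(_ t); rewrite in_flip in_symdiff inE.
  by case: (t \in A); case: (t \in B); case: (t == x).
by rewrite in_symdiff in_flip inE; case: (t \in A); case: (t == x).
Qed.

Lemma square A x y z w : flip (flip A x) z = flip (flip A y) w ->
  x != y -> x != z -> w = x.
Proof.
move=> /setP /(_ x) + /negbTE Hxy /negbTE Hxz; rewrite !in_flip eqxx Hxy Hxz.
by case: (x \in A); case: eqP.
Qed.

Lemma mem_perm_im (p : {perm T}) A t : (t \in p @: A) = ((p^-1)%g t \in A).
Proof. by rewrite -{1}(permKV p t) mem_imset //; exact: perm_inj. Qed.

Lemma symdiffK A R : symdiff (symdiff A R) R = A.
Proof. by apply/setP => t; rewrite !in_symdiff; case: (t \in A); case: (t \in R). Qed.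

Lemma symdiff_nu A B R : symdiff (symdiff A R) (symdiff B R) = symdiff A B.
Proof. by apply/setP => t; rewrite !in_symdiff; case: (t \in A); case: (t \in B); case: (t \in R). Qed.

Lemma symdiff_im (p : {perm T}) A B : symdiff (p @: A) (p @: B) = p @: symdiff A B.
Proof. by apply/setP => t; rewrite !in_symdiff !mem_perm_im in_symdiff. Qed.

End Flip.
Set Implicit Arguments. Unset Strict Implicit. Unset Printing Implicit Defensive.

Section Abstract.
Variable T : finType.
Implicit Types A B S : {set T}.
Variable F : pred {set T}.
Hypothesis Hup : forall A B, A \subset B -> F A -> F B.
Hypothesis HFT : F setT.
Hypothesis HF1 : forall x, F (flip setT x).
Variable f : {set T} -> {set T}.
Hypothesis fF : forall S, F S -> F (f S).
Hypothesis finj : forall A B, F A -> F B -> f A = f B -> A = B.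
Hypothesis fsurj : forall B, F B -> exists2 S, F S & f S = B.
Hypothesis fadj : forall A x, F A -> F (flip A x) -> exists y, f (flip A x) = flip (f A) y.

Definition lab x := odflt x [pick y | f (flip setT x) == flip (f setT) y].

Lemma labP x : f (flip setT x) = flip (f setT) (lab x).
Proof.
rewrite /lab; case: pickP => [y /eqP //|H].
by have [y Hy] := @fadj setT x HFT (HF1 x); have := H y; rewrite Hy eqxx.
Qed.

Lemma flip_sub A x : x \notin A -> A \subset flip A x.
Proof. move=> Hx; apply/subsetP => t Ht; rewrite in_flip Ht /=; apply/negP => /eqP Etx.
by rewrite -Etx Ht in Hx. Qed.

Lemma prop_in S x : x \in S -> F S -> F (flip S x) ->
  f (flip S x) = flip (f S) (lab x).
Proof.
move: {2}#|~: S| (leqnn #|~: S|) => n; elim: n S => [|n IH] S.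
  rewrite leqn0 => /eqP /cards0_eq H0 *.
  by rewrite -[S]setCK H0 setC0; exact: labP.
move=> Hn xS FS FSx.
case: (set_0Vmem (~: S)) => [H0|[j]].
  by rewrite -[S]setCK H0 setC0; exact: labP.
rewrite inE => jS.
have jx : j != x by apply: contraNneq jS => ->.
set S' := flip S j.
have FS' : F S' by apply: Hup FS; exact: flip_sub.
have FS'x : F (flip S' x).
  apply: Hup FSx; rewrite /S' flipC; apply: flip_sub.
  by rewrite in_flip (negbTE jS) (negbTE jx).
have xS' : x \in S' by rewrite in_flip xS eq_sym (negbTE jx).
have HS' : #|~: S'| <= n.
  have : #|~: S'| < #|~: S|.
    apply: proper_card; rewrite properC /S'; apply/properP; split.
      by apply: flip_sub.
    by exists j => //; rewrite in_flip eqxx (negbTE jS).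
  by move=> H; rewrite -ltnS; exact: leq_trans H Hn.
have IH' := IH S' HS' xS' FS' FS'x.
have [a Ha] := @fadj S x FS FSx.
have [b Hb] := @fadj S j FS FS'.
have FSxj : F (flip (flip S x) j) by rewrite flipC.
have [c Hc] := @fadj (flip S x) j FSx FSxj.
have Heq : flip (flip (f S) a) c = flip (flip (f S) b) (lab x).
  by rewrite -Ha -Hc -Hb -IH' /S' flipC.
have ab : a != b.
  apply/eqP => ab; move: Hb; rewrite -ab -Ha => /esym /(finj FSx FS') /flip_inj /eqP.
  by rewrite eq_sym (negbTE jx).
have ac : a != c.
  apply/eqP => ac; move: Hc; rewrite -ac Ha flipK => /(finj FSxj FS) /flip2_eq /eqP.
  by rewrite eq_sym (negbTE jx).
by rewrite Ha (square Heq ab ac).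
Qed.

Lemma prop_all S x : F S -> F (flip S x) -> f (flip S x) = flip (f S) (lab x).
Proof.
move=> FS FSx; have [xS|xS] := boolP (x \in S); first exact: prop_in.
have xS' : x \in flip S x by rewrite in_flip eqxx (negbTE xS).
have := prop_in xS' FSx; rewrite flipK FS => /(_ isT) ->.
by rewrite flipK.
Qed.

Lemma lab_inj : injective lab.
Proof.
move=> x y Hxy; apply: (@flip_inj _ setT); apply: finj => //.
by rewrite !labP Hxy.
Qed.

Definition tpi := perm lab_inj.
Definition Rs := ~: f setT.

Lemma formula S : F S -> f S = symdiff (tpi @: S) Rs.
Proof.
move: {2}#|~: S| (leqnn #|~: S|) => n; elim: n S => [|n IH] S.
  rewrite leqn0 => /eqP /cards0_eq H0 _.
  rewrite -[S]setCK H0 setC0; apply/setP => t.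
  by rewrite in_symdiff mem_perm_im !inE; case: (t \in f setT).
move=> Hn FS.
case: (set_0Vmem (~: S)) => [H0|[j]].
  rewrite -[S]setCK H0 setC0; apply/setP => t.
  by rewrite in_symdiff mem_perm_im !inE; case: (t \in f setT).
rewrite inE => jS.
set S' := flip S j.
have FS' : F S' by apply: Hup FS; exact: flip_sub.
have HS' : #|~: S'| <= n.
  have : #|~: S'| < #|~: S|.
    apply: proper_card; rewrite properC /S'; apply/properP; split.
      by apply: flip_sub.
    by exists j => //; rewrite in_flip eqxx (negbTE jS).
  by move=> H; rewrite -ltnS; exact: leq_trans H Hn.
have FSS : F (flip S' j) by rewrite /S' flipK.
have := prop_all FS' FSS; rewrite /S' flipK => ->.
rewrite (IH _ HS' FS'); apply/setP => t.
rewrite in_flip !in_symdiff !mem_perm_im in_flip.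
have -> : (t == lab j) = ((tpi^-1)%g t == j).
  by rewrite -(inj_eq (@perm_inj _ tpi) ((tpi^-1)%g t) j) (permKV tpi t) permE.
by case: ((tpi^-1)%g t \in S); case: (t \in Rs); case: (_ == j).
Qed.

Lemma Rs_irr x m : x \in Rs -> minset F m -> x \notin m.
Proof.
move=> xR /minsetP [Fm Hmin]; apply/negP => xm.
have [S0 FS0 HS0] := fsurj Fm.
have yS0 : (tpi^-1)%g x \notin S0.
  apply/negP => yS; move: xm; rewrite -HS0 (formula FS0) in_symdiff mem_perm_im yS xR.
  by [].
have FS1 : F (flip S0 ((tpi^-1)%g x)) by apply: Hup FS0; exact: flip_sub.
have := prop_all FS0 FS1.
have -> : lab ((tpi^-1)%g x) = x by have := permKV tpi x; rewrite permE.
rewrite HS0 => Hf.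
have := Hmin (flip m x); rewrite -Hf (fF FS1) => /(_ isT).
rewrite Hf; have -> : flip m x \subset m.
  by apply/subsetP => t; rewrite in_flip; case: eqP => [->|_]; rewrite ?xm //; case: (t \in m).
by move=> /(_ isT) /setP /(_ x); rewrite in_flip eqxx xm.
Qed.

Lemma nuF (R : {set T}) S : (forall x m, x \in R -> minset F m -> x \notin m) -> F S -> F (symdiff S R).
Proof.
move=> HR FS; have [m mmin mS] := minset_exists FS.
apply: Hup (minsetp mmin); apply/subsetP => t tm.
rewrite in_symdiff (subsetP mS _ tm).
by case tR: (t \in R) => //; rewrite (negbTE (HR _ _ tR mmin)) in tm.
Qed.

Lemma pi_min m : minset F m -> minset F (tpi @: m).
Proof.
move=> mmin; have Fm := minsetp mmin.
have E : tpi @: m = symdiff (f m) Rs by rewrite (formula Fm) symdiffK.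
apply/minsetP; split.
  by rewrite E; apply: nuF (fF Fm); exact: @Rs_irr.
move=> B FB Bsub.
have FBR : F (symdiff B Rs) := nuF (@Rs_irr) FB.
have [S1 FS1 HS1] := fsurj FBR.
have PS1 : tpi @: S1 = B.
  by move: HS1; rewrite (formula FS1) => /(congr1 (fun A => symdiff A Rs)); rewrite !symdiffK.
have S1m : S1 \subset m.
  apply/subsetP => t tS1.
  have : tpi t \in tpi @: m by apply: (subsetP Bsub); rewrite -PS1 imset_f.
  by rewrite mem_imset //; exact: perm_inj.
by rewrite -PS1 (minsetinf mmin FS1 S1m).
Qed.

End Abstract.
Unset Implicit Arguments. Unset Strict Implicit. Unset Printing Implicit Defensive.

Section Main.
Variables (X : Xfamily) (T : finType) (e : rel T).
Implicit Types A B S R : {set T}.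

Definition nu_fun R (HR : forall S, X T e S -> X T e (symdiff S R))
  (s : Xsets X T e) : Xsets X T e := exist _ (symdiff (val s) R) (HR _ (valP s)).

Lemma nu_inj R HR : injective (@nu_fun R HR).
Proof.
move=> s1 s2 /(congr1 val) /= /(congr1 (fun A => symdiff A R)); rewrite !symdiffK.
exact: val_inj.
Qed.

Definition psi_fun (psi : {perm T}) (Hp : forall S, X T e S -> X T e (psi @: S))
  (s : Xsets X T e) : Xsets X T e := exist _ (psi @: val s) (Hp _ (valP s)).

Lemma psi_inj (psi : {perm T}) Hp : injective (@psi_fun psi Hp).
Proof.
move=> s1 s2 /(congr1 val) /= H; apply: val_inj; apply/setP => t.
by move/setP: H => /(_ (psi t)); rewrite !mem_imset //; exact: perm_inj.
Qed.

Lemma irrP R : reflect (forall x m, x \in R -> minset (X T e) m -> x \notin m)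
  (X_irrelevant X e R).
Proof.
apply: (iffP forall_inP) => [H x m xR mm | H x xR].
  by have /forallP /(_ m) /implyP := H x xR; apply.
by apply/forallP => m; apply/implyP => mm; exact: H.
Qed.

Lemma MXP (psi : {perm T}) : reflect (forall m, minset (X T e) m -> minset (X T e) (psi @: m))
  (M_X X e psi).
Proof.
apply: (iffP forallP) => [H m mm | H m].
  by have /implyP /(_ mm) /andP [] := H m.
apply/implyP => mm; rewrite /minimal_Xset H //= card_imset //; exact: perm_inj.
Qed.

Lemma TAR_AutP (p : {perm Xsets X T e}) :
  reflect (forall s1 s2, TAR_adj (p s1) (p s2) = TAR_adj s1 s2) (p \in TAR_Aut X e).
Proof.
rewrite inE; apply: (iffP forallP) => [H s1 s2 | H s1].
  by have /forallP /(_ s2) /eqP := H s1.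
by apply/forallP => s2; rewrite H.
Qed.

End Main.

Definition fX (X : Xfamily) (T : finType) (e : rel T) (phi : {perm Xsets X T e}) (S : {set T}) :=
  oapp (fun s => val (phi s)) S (insub S).

Theorem theorem2p18 (X : Xfamily) (T : finType) (e : rel T) :
  Xset_parameter X -> simple_graph e -> no_isolated e ->
  (forall R : {set T}, X_irrelevant X e R ->
     exists p : {perm Xsets X T e}, acts_as_nu R p) /\
  (forall psi : {perm T}, M_X X e psi ->
     exists p : {perm Xsets X T e}, acts_as_psi psi p) /\
  TAR_Aut X e = <<TAR_gens X e>>%g.
Proof.
move=> [Hiso [Hsup [H0 [Hdisc H4]]]] Hg Hni.
have Hup : forall A B : {set T}, A \subset B -> X T e A -> X T e B := Hsup T e Hg.
have HF1 : forall x, X T e (flip setT x).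
  move=> x; apply: H4 => //.
  have -> : flip setT x = [set~ x] by apply/setP => t; rewrite in_flip !inE.
  by rewrite cardsC1 subn1.
have HFT : X T e setT.
  have [x0 _] : exists x0 : T, true by case/card_gt0P: (Hg.1) => x0 _; exists x0.
  exact: Hup _ _ (subsetT _) (HF1 x0).
have nuX : forall R, X_irrelevant X e R -> forall S, X T e S -> X T e (symdiff S R).
  by move=> R /irrP HR S; exact: nuF Hup R S HR.
have psiX : forall psi : {perm T}, M_X X e psi -> forall S, X T e S -> X T e (psi @: S).
  move=> psi /MXP Hm S FS; have [m mm mS] := minset_exists FS.
  apply: Hup (minsetp (Hm _ mm)); exact: imsetS.
split; [|split].
- move=> R HR; exists (perm (nu_inj X T e R (nuX R HR))).
  by apply/forallP => s; rewrite permE.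
- move=> psi HM; exists (perm (psi_inj X T e psi (psiX psi HM))).
  by apply/forallP => s; rewrite permE.
apply/eqP; rewrite eqEsubset; apply/andP; split.
  apply/subsetP => phi /TAR_AutP Hphi.
  pose f := fX X T e phi.
  have fval : forall s, f (val s) = val (phi s) by move=> s; rewrite /f /fX valK.
  have fF : forall S, X T e S -> X T e (f S).
    by move=> S FS; have := fval (exist _ S FS) => /= ->; exact: valP.
  have finj : forall A B, X T e A -> X T e B -> f A = f B -> A = B.
    move=> A B FA FB; have := fval (exist _ A FA); have := fval (exist _ B FB) => /= -> ->.
    by move=> /val_inj /perm_inj H; have := congr1 val H.
  have fsurj : forall B, X T e B -> exists2 S, X T e S & f S = B.
    move=> B FB; exists (val ((phi^-1)%g (exist _ B FB))); first exact: valP.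
    by rewrite fval permKV.
  have fadj : forall A x, X T e A -> X T e (flip A x) -> exists y, f (flip A x) = flip (f A) y.
    move=> A x FA FAx; apply/symdiff1P.
    have := Hphi (exist _ A FA) (exist _ (flip A x) FAx); rewrite /TAR_adj -!fval /= => ->.
    by apply/symdiff1P; exists x.
  have Hform := formula Hup HFT HF1 finj fadj.
  have HirrR : X_irrelevant X e (Rs f).
    by apply/irrP => x m; exact: (Rs_irr Hup HFT HF1 fF finj fsurj fadj).
  have HM : M_X X e (tpi HFT HF1 finj fadj).
    by apply/MXP => m; exact: (pi_min Hup HFT HF1 fF finj fsurj fadj).
  have -> : phi = (perm (psi_inj X T e _ (psiX _ HM)) * perm (nu_inj X T e (Rs f) (nuX _ HirrR)))%g.
    apply/permP => s; rewrite permM !permE; apply: val_inj => /=.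
    by rewrite -fval (Hform _ (valP s)).
  rewrite groupM // mem_gen // inE; apply/orP; [right|left]; apply/existsP.
    by exists (tpi HFT HF1 finj fadj); rewrite HM /=; apply/forallP => s; rewrite permE.
  by exists (Rs f); rewrite HirrR /=; apply/forallP => s; rewrite permE.
have gA : group_set (TAR_Aut X e).
  apply/group_setP; split; first by apply/TAR_AutP => s1 s2; rewrite !perm1.
  move=> p q /TAR_AutP Hp /TAR_AutP Hq; apply/TAR_AutP => s1 s2.
  by rewrite !permM Hq Hp.
suff : (<<TAR_gens X e>> \subset Group gA)%g by [].
rewrite gen_subG; apply/subsetP => p; rewrite inE.
case/orP => [/existsP [R /andP [_ /forallP Hnu]] | /existsP [psi /andP [_ /forallP Hpsi]]];
  apply/TAR_AutP => s1 s2; rewrite /TAR_adj.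
  by rewrite (eqP (Hnu s1)) (eqP (Hnu s2)) symdiff_nu.
rewrite (eqP (Hpsi s1)) (eqP (Hpsi s2)) symdiff_im card_imset //; exact: perm_inj.
Qed.
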